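(* With $E^\star_{as}(M,B)$ and $E^\infty_{\rm No\text{-}HARQ}$ as defined below, $$\lim_{M\to\infty}E^\star_{as}(M,B)=\int_0^{E^\infty_{\rm No\text{-}HARQ}}Q\!\left(\frac{E-B\ln 2}{\sqrt{2E}}\right)\mathrm{d}E.$$
   Context: Fix $B>0$ and $T_{\rm rel}\in(0,1)$. Let $Q(x)=\frac{1}{\sqrt{2\pi}}\int_x^\infty e^{-t^2/2}\,dt$. Define $$E^\infty_{\rm No\text{-}HARQ}=\frac{\big(Q^{-1}(1-T_{\rm rel})\big)^2}{2}\left(1+\sqrt{1+\frac{2B\ln 2}{\big(Q^{-1}(1-T_{\rm rel})\big)^2}}\right)^2,$$ and for $M\ge1$, $$E^\star_{as}(M,B)=\min\Big\{E_1+\sum_{m=2}^M Q\!\left(\frac{\sum_{i=1}^{m-1}E_i-B\ln 2}{\sqrt{2\sum_{i=1}^{m-1}E_i}}\right)E_m\;:\;E_1,\dots,E_M\ge0,\ \sum_{m=1}^M E_m=E^\infty_{\rm No\text{-}HARQ}\Big\},$$ where $Q(\cdot)$ at zero cumulative energy is interpreted as $1$. (This is the limit, as the latency budget tends to infinity, of the minimum average energy of an IR-HARQ scheme with $M$ rounds.) *)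

(* Defs.v *)
From Stdlib Require Import Reals Lra ClassicalEpsilon.
Open Scope R_scope.

(* Riemann integral of f over [a,b] (value of RiemannInt, which does not depend
   on the integrability proof); 0 if f is not Riemann integrable. *)
Definition RInt (f : R -> R) (a b : R) : R :=
  epsilon (inhabits 0)
    (fun I => exists pr : Riemann_integrable f a b, RiemannInt pr = I).

Definition improper_lim (f : R -> R) (x l : R) : Prop :=
  forall eps, 0 < eps -> exists b0, forall b, b0 <= b -> Rabs (RInt f x b - l) < eps.

Definition Qfun (x : R) : R :=
  / sqrt (2 * PI) *
  epsilon (inhabits 0) (improper_lim (fun t => exp (- (t ^ 2) / 2)) x).

(* Inverse of Q (Q is a bijection R -> (0,1)) *)
Definition Qinv (y : R) : R := epsilon (inhabits 0) (fun x => Qfun x = y).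

Definition Einf (B Trel : R) : R :=
  let q := Qinv (1 - Trel) in
  (q ^ 2 / 2) * (1 + sqrt (1 + 2 * B * ln 2 / q ^ 2)) ^ 2.

(* Q((S - B ln 2)/sqrt(2 S)) as a function of the cumulative energy S,
   with the convention that it equals 1 at zero cumulative energy. *)
Definition Qcum (B S : R) : R :=
  if Rle_dec S 0 then 1 else Qfun ((S - B * ln 2) / sqrt (2 * S)).

Fixpoint rsum (f : nat -> R) (n : nat) : R :=
  match n with
  | O => 0
  | S k => rsum f k + f (S k)
  end.

Definition feasible (M : nat) (Etot : R) (E : nat -> R) : Prop :=
  (forall i, (1 <= i <= M)%nat -> 0 <= E i) /\ rsum E M = Etot.

Definition avg_energy (B : R) (M : nat) (E : nat -> R) : R :=
  E 1%nat + rsum (fun m => if Nat.leb m 1 then 0 else Qcum B (rsum E (m - 1)) * E m) M.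

Definition Eas (M : nat) (B Trel : R) : R :=
  epsilon (inhabits 0) (fun v =>
    (exists E, feasible M (Einf B Trel) E /\ avg_energy B M E = v) /\
    (forall E, feasible M (Einf B Trel) E -> v <= avg_energy B M E)).

(* Main.v *)
Require Import Defs.
From Stdlib Require Import Reals Lra Lia ZArith ClassicalEpsilon.
Open Scope R_scope.

Lemma cont_epsd (F : R -> R) x : continuity_pt F x -> forall e, 0 < e ->
  exists d, 0 < d /\ forall y, Rabs (y - x) < d -> Rabs (F y - F x) < e.
Proof.
intros H e e0. destruct (H e e0) as [d [d0 Hd]].
exists d; split; auto. intros y Hy.
destruct (Req_dec y x) as [->|ne].
- unfold Rminus; rewrite Rplus_opp_r, Rabs_R0; auto.
- apply (Hd y). split; [split; [exact I| auto] | exact Hy].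
Qed.

Definition avgf (f : R -> R) (M : nat) (E : nat -> R) : R :=
  E 1%nat + rsum (fun m => if Nat.leb m 1 then 0 else f (rsum E (m - 1)) * E m) M.

From HB Require Import structures.
From mathcomp Require all_boot all_order all_algebra all_classical all_reals all_analysis Rstruct Rstruct_topology.

Module MC.
Import all_boot all_order all_algebra all_classical all_reals all_analysis Rstruct Rstruct_topology.
Import Order.TTheory GRing.Theory Num.Theory.
Import numFieldNormedType.Exports.
Local Open Scope classical_set_scope.
Local Open Scope ring_scope.

Section G.
Context {R : realType}.

Lemma epsd_cont (F : R -> R) x :
  (forall e, 0 < e -> exists2 d, 0 < d & forall y, `|y - x| < d -> `|F y - F x| < e) ->
  {for x, continuous F}.
Proof.
move=> H; apply/cvgrPdist_lt => e e0.
have [d d0 Hd] := H e e0.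
exists d => //= t /= xt.
rewrite distrC; apply: Hd; by rewrite distrC.
Qed.

Lemma epsd_der (F : R -> R) x l :
  (forall e, 0 < e -> exists2 d, 0 < d & forall h, h != 0 -> `|h| < d -> `|(F (x+h) - F x)/h - l| < e) ->
  is_derive x 1 F l.
Proof.
move=> H.
have C : (fun h : R => h^-1 *: ((F \o shift x) (h *: 1) - F x)) @ 0^' --> l.
  apply/cvgrPdist_lt => e e0.
  have [d d0 Hd] := H e e0.
  exists d => //= t /= xt tn0.
  rewrite distrC (_ : t%:A = t); last by rewrite /GRing.scale/= mulr1.
  rewrite (_ : t^-1 *: _ = t^-1 * (F (t + x) - F x)) // (addrC t) mulrC.

  apply: Hd => //.
  by move: xt; rewrite sub0r normrN.
apply: DeriveDef; first by apply/cvg_ex; exists l.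
exact: cvg_lim.
Qed.

Lemma G1 (F : R -> R) :
  F 0 = 0 ->
  (forall x, 0 < x -> forall e, 0 < e -> exists2 d, 0 < d & forall h, h != 0 -> `|h| < d -> `|(F (x+h) - F x)/h - expR (- x ^+ 2)| < e) ->
  (forall x e, 0 < e -> exists2 d, 0 < d & forall y, `|y - x| < d -> `|F y - F x| < e) ->
  forall y, 0 < y -> F y = gauss_integral_proof.integral0_gauss y.
Proof.
move=> F0 Hd Hc y y0.
have cF : continuous F by move=> x; apply: epsd_cont; apply: Hc.
have dF (x : R) : 0 < x -> is_derive x 1 F (gauss_fun x).
  by move=> x0; apply: epsd_der; apply: Hd.
have := @continuous_FTC2 R gauss_fun F 0 y y0.
move=> /(_ _ _ _) h.
rewrite /gauss_integral_proof.integral0_gauss /Rintegral h.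
- by rewrite F0 -EFinB subr0.
- by apply: continuous_subspaceT; exact: continuous_gauss_fun.
- split.
  + move=> x; rewrite in_itv /= => /andP[x0 _].
    by have [] := dF x x0.
  + exact: cvg_at_right_filter (cF 0).
  + exact: cvg_at_left_filter (cF y).
- move=> x; rewrite in_itv /= => /andP[x0 _].
  by rewrite derive1E; have [] := dF x x0.
Qed.

Lemma G2 e : 0 < e -> exists M : R, forall y, M < y ->
  `|gauss_integral_proof.integral0_gauss y ^+ 2 - pi / 4| < e.
Proof.
move=> e0.
have := @gauss_integral_proof.cvg_integral0_gauss_sqr R.
move/cvgrPdist_lt => /(_ e e0) [M [_ HM]].
exists M => y My; rewrite distrC; exact: HM.
Qed.
End G.

Section M.
Context {R : realType}.

Lemma cont_sum (T : topologicalType) (I : eqType) (r : seq I) (P : pred I)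
  (F : I -> T -> R) x :
  (forall i, {for x, continuous (F i)}) ->
  {for x, continuous (fun y => \sum_(i <- r | P i) F i y)}.
Proof.
move=> H; elim: r => [|a r IH].
  rewrite (_ : (fun y => _) = cst 0); first exact: cst_continuous.
  by apply/funext => y; rewrite big_nil.
case Pa: (P a).
  rewrite (_ : (fun y => _) = F a + (fun y => \sum_(i <- r | P i) F i y)).
    exact: continuousD.
  by apply/funext => y; rewrite big_cons Pa.
rewrite (_ : (fun y => _) = (fun y => \sum_(i <- r | P i) F i y)) //.
by apply/funext => y; rewrite big_cons Pa.
Qed.

Definition Jobj (f : R -> R) {n} (w : 'I_n -> R) :=
  \sum_(i < n) f (\sum_(j < n | (j < i)%N) w j) * w i.

Lemma MINEX (f : R -> R) n (T : R) : 0 <= T -> continuous f ->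
  exists v : 'I_n.+1 -> R, [/\ (forall i, 0 <= v i), \sum_i v i = T &
   forall w : 'I_n.+1 -> R, (forall i, 0 <= w i) -> \sum_i w i = T -> Jobj f v <= Jobj f w].
Proof.
move=> T0 cf.
pose A := [set v : 'rV[R]_n.+1 | (forall i, 0 <= v ord0 i) /\ \sum_i v ord0 i = T].
pose B := [set v : 'rV[R]_n.+1 | forall i, (fun=> `[0, T]%classic) i (v ord0 i)].
have cB : compact B by apply: rV_compact => _; exact: segment_compact.
have cA : compact A.
  apply: (subclosed_compact _ cB).
  - have -> : A = (\bigcap_(i in setT) [set v : 'rV[R]_n.+1 | 0 <= v ord0 i]) `&`
               [set v : 'rV[R]_n.+1 | \sum_i v ord0 i = T].
      apply/seteqP; split => v /=.
        by move=> [h1 h2]; split => // i _; exact: h1.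
      by move=> [h1 h2]; split => // i; exact: (h1 i).
    apply: closedI.
      apply: closed_bigI => i _.
      have h := ((continuous_closedP _).1 (@coord_continuous R 1 n.+1 ord0 i)).
      exact: (h _ (@closed_ge R 0)).
    have cs : continuous (fun v : 'rV[R]_n.+1 => \sum_i v ord0 i).
      move=> v; apply: cont_sum => i; exact: coord_continuous.
    exact: ((continuous_closedP _).1 cs _ (@closed_eq R T)).
  - move=> v [h1 h2] i /=; rewrite in_itv /= h1 /= -h2.
    rewrite (bigD1 i) //= lerDl; apply: sumr_ge0 => j _; exact: h1.
pose J := fun v : 'rV[R]_n.+1 => Jobj f (fun i => v ord0 i).
have cJ : {within A, continuous J}.
  apply: continuous_subspaceT => v.
  rewrite /J /Jobj; apply: cont_sum => i.
  apply: continuousM; last exact: coord_continuous.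
  apply: (@continuous_comp _ _ _ (fun v : 'rV[R]_n.+1 => \sum_(j < n.+1 | (j < i)%N) v ord0 j) f).
    by apply: cont_sum => j; exact: coord_continuous.
  exact: cf.
have A0 : A !=set0.
  exists (\row_j (if j == ord0 then T else 0)); split.
    by move=> i; rewrite mxE; case: ifP.
  rewrite (bigD1 ord0) //= mxE eqxx big1 ?addr0 // => i /negbTE ni.
  by rewrite mxE ni.
have [c cAc minc] := EVT_min_rV A0 cA cJ.
rewrite inE in cAc; case: cAc => c1 c2.
exists (fun i => c ord0 i); split => // w w1 w2.
have := minc (\row_j w j).
rewrite /J.
have -> : (fun i => (\row_j w j) ord0 i) = w by apply/funext => i; rewrite mxE.
apply; rewrite inE; split.
  by move=> i; rewrite mxE.
by under eq_bigr do rewrite mxE.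
Qed.
End M.

Lemma RcosE (x : R) : Rtrigo_def.cos x = cos x.
Proof.
apply/esym; rewrite -(cvg_lim (@Rhausdorff R) (@cvg_cos_coeff' R x)).
apply: (@cvg_lim R^o) => //.
rewrite /Rtrigo_def.cos; case: exist_cos => y.
rewrite /cos_in /infinite_sum => H.
rewrite -cvg_shiftS /=; apply/cvgrPdist_lt => /= e /RltP /H[N HN].
near=> n.
have nN : (n >= N)%coq_nat by apply/ssrnat.leP; near: n; exact: nbhs_infty_ge.
move: HN => /(_ _ nN) /[!RdistE] /RltP /=.
rewrite distrC sum_f_R0E; congr (`| _ - _ | < e).
apply: eq_bigr=> k _.
rewrite /cos_n /cos_coeff' RdivE RpowE INRE factE.
have -> : Rsqr x = x ^+ 2 by rewrite expr2.
rewrite RpowE -exprM -exprnP (_ : (2 * k)%coq_nat = k.*2); last by rewrite -mul2n.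
rewrite [in RHS]mulrC mulrA RmultE mul2n [X in X * _]mulrC.
by [].
Unshelve. all: by end_near. Qed.

Lemma RPIE : PI = pi.
Proof.
have [h1a h1b] := andP (@pihalf_02 R).
have h2 := @cos_pihalf R.
have h3 := @cos_gt0_pihalf R.
have /RltP s1 := PI2_RGT_0.
have c1 := cos_PI2.
have c2 := cos_gt_0.
have [lt|lt|eq] := ltgtP (pi / 2) (PI / 2).
- exfalso; have H : (0 < Rtrigo_def.cos (pi/2))%coqR.
    apply: c2; last exact/RltP.
    apply/RltP; apply: (lt_trans _ h1a); by rewrite oppr_lt0.
  by move/RltP: H; rewrite RcosE h2 ltxx.
- exfalso; have H : 0 < cos (PI / 2).
    apply: h3; apply/andP; split => //.
    apply: (lt_trans _ s1); by rewrite oppr_lt0.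
  by move: H; rewrite -RcosE c1 ltxx.
- have : PI = PI / 2 * 2 by rewrite -mulrA mulVf // mulr1.
  by rewrite -eq -mulrA mulVf // mulr1.
Qed.

Lemma S2 (F : R -> R) : F 0%coqR = 0%coqR ->
  (forall x, (0 < x)%coqR -> derivable_pt_lim F x (exp (- x ^ 2)%coqR)) ->
  (forall x, continuity_pt F x) ->
  forall eps, (0 < eps)%coqR -> exists M, forall y, (M < y)%coqR ->
    (Rabs (F y ^ 2 - PI / 4) < eps)%coqR.
Proof.
move=> F0 Hd Hc eps /RltP e0.
have HG := @G1 R F F0.
have [M HM] := @G2 R eps e0.
exists (Rmax M 0) => y /RltP My.
have y0 : 0 < y by apply: le_lt_trans My; apply/RleP; apply: Rmax_r.
have My' : M < y by apply: le_lt_trans My; apply/RleP; apply: Rmax_l.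
have e4 : 4%coqR = 4 :> R by rewrite IZRposE INRE.
apply/RltP; rewrite RpowE RPIE HG //; first by rewrite e4; exact: HM.
- move=> x /RltP x0 e /RltP ep.
  have [[d d0] Hdd] := Hd x x0 e ep.
  exists d; first exact/RltP.
  move=> h /eqP hn /RltP hd; apply/RltP.
  have := Hdd h hn hd.
  by rewrite RexpE RpowE.
- move=> x e /RltP ep.
  have [d [d0 Hdd]] := cont_epsd F x (Hc x) e ep.
  exists d; first exact/RltP.
  by move=> z /RltP hz; apply/RltP; apply: Hdd.
Qed.

Lemma rsumE (E : nat -> R) k : rsum E k = \sum_(i < k) E i.+1.
Proof.
elim: k => [|k IH]; first by rewrite big_ord0.
by rewrite big_ord_recr /= IH.
Qed.

Lemma Lconv (f : R -> R) n (E : nat -> R) : f 0 = 1 ->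
  avgf f n.+1 E = Jobj f (fun i : 'I_n.+1 => E i.+1).
Proof.
move=> f0.
rewrite /avgf /Jobj rsumE big_ord_recl /= big_ord_recl /=.
have -> : f (\sum_(j < n.+1 | (j < 0)%N) E j.+1) = 1 by rewrite big_pred0.
rewrite mul1r add0r; congr (_ + _).
apply: eq_bigr => i _.
rewrite /bump /= add1n add0n.
have -> : (rsum E i + E i.+1)%coqR = rsum E i.+1 by [].
rewrite rsumE (big_ord_widen n.+1 (fun j => E j.+1)) //.
by rewrite ltnS ltnW.
Qed.

Lemma S3 (f : R -> R) n (T : R) : (0 <= T)%coqR -> f 0 = 1 ->
  (forall x, continuity_pt f x) ->
  exists E, feasible n.+1 T E /\ forall E', feasible n.+1 T E' ->
    (avgf f n.+1 E <= avgf f n.+1 E')%coqR.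
Proof.
move=> /RleP T0 f0 Hc.
have cf : continuous f.
  move=> x; apply: epsd_cont => e /RltP ep.
  have [d [d0 Hdd]] := cont_epsd f x (Hc x) e ep.
  exists d; first exact/RltP.
  by move=> z /RltP hz; apply/RltP; apply: Hdd.
have [v [v0 vs vmin]] := @MINEX R f n T T0 cf.
pose E := fun i : nat => if (0 < i <= n.+1)%N then v (inord i.-1) else 0.
have Ev : (fun i : 'I_n.+1 => E i.+1) = v.
  apply/funext => i; rewrite /E /= ltn_ord; congr v; apply: val_inj; exact: inordK.
exists E; split.
  split.
    move=> i _; rewrite /E; case: ifP => _; [exact/RleP|exact: Rle_refl].
  by rewrite rsumE -vs -Ev.
move=> E' [E'0 E's].
apply/RleP; rewrite !Lconv // Ev; apply: vmin.
  move=> i; apply/RleP; apply: E'0; split; first by apply/ssrnat.leP.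
  by apply/ssrnat.leP; rewrite ltnS -ltnS ltn_ord.
by rewrite -rsumE.
Qed.
End MC.


Section CI.
Variable f : R -> R.
Hypothesis Hc : forall x, continuity_pt f x.

Lemma integ a b : Riemann_integrable f a b.
Proof.
destruct (Rle_dec a b) as [h|h].
- apply continuity_implies_RiemannInt; auto.
- apply RiemannInt_P1, continuity_implies_RiemannInt; auto. lra.
Qed.

Lemma RInt_eq a b : RInt f a b = RiemannInt (integ a b).
Proof.
unfold RInt.
destruct (epsilon_spec (inhabits 0)
  (fun I => exists pr : Riemann_integrable f a b, RiemannInt pr = I))
  as [pr Hpr].
- exists (RiemannInt (integ a b)), (integ a b); reflexivity.
- rewrite <- Hpr. apply RiemannInt_P5.
Qed.

Lemma RInt_chasles a b c : RInt f a b + RInt f b c = RInt f a c.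
Proof. rewrite !RInt_eq. apply RiemannInt_P26. Qed.

Lemma RInt_same a : RInt f a a = 0.
Proof. rewrite RInt_eq. apply RiemannInt_P9. Qed.

Lemma RInt_bound a b l u : a <= b -> (forall x, a < x < b -> l <= f x <= u) ->
  l * (b - a) <= RInt f a b <= u * (b - a).
Proof. intros. rewrite RInt_eq. apply RiemannInt_const_bound; auto. Qed.

Lemma dpl_local (g h : R -> R) x l r : 0 < r -> (forall y, Rabs (y - x) < r -> g y = h y) ->
  derivable_pt_lim h x l -> derivable_pt_lim g x l.
Proof.
intros r0 E D eps e0. destruct (D eps e0) as [d Hd].
assert (m0 : 0 < Rmin d r) by (apply Rmin_pos; [apply cond_pos | lra]).
exists (mkposreal _ m0). intros h0 h0n h0d. simpl in h0d.
rewrite !E.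
- apply Hd; auto. apply Rlt_le_trans with (1 := h0d), Rmin_l.
- unfold Rminus; rewrite Rplus_opp_r, Rabs_R0; lra.
- replace (x + h0 - x) with h0 by ring. apply Rlt_le_trans with (1 := h0d), Rmin_r.
Qed.

Lemma RInt_deriv a x : derivable_pt_lim (fun y => RInt f a y) x (f x).
Proof.
assert (h : x - 1 <= x + 1) by lra.
assert (C0 : forall y, x - 1 <= y <= x + 1 -> continuity_pt f y) by auto.
apply dpl_local with (h := fun y => RInt f a (x-1) + primitive h (FTC_P1 h C0) y) (r := 1).
- lra.
- intros y Hy. apply Rabs_def2 in Hy. unfold primitive.
  destruct (Rle_dec (x-1) y); [|lra]. destruct (Rle_dec y (x+1)); [|lra].
  rewrite <- (RInt_chasles a (x-1) y). f_equal. rewrite RInt_eq. apply RiemannInt_P5.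
- replace (f x) with (0 + f x) by ring. apply derivable_pt_lim_plus.
  + apply derivable_pt_lim_const.
  + apply RiemannInt_P27. lra.
Qed.

Lemma RInt_cont a x : continuity_pt (fun y => RInt f a y) x.
Proof.
apply derivable_continuous_pt. exists (f x). apply RInt_deriv.
Qed.
End CI.


Definition g := fun t : R => exp (- (t ^ 2) / 2).

Lemma g_der x : derivable_pt_lim g x (g x * (- x)).
Proof.
unfold g.
apply (derivable_pt_lim_comp (fun t => - (t ^ 2) / 2) exp).
- replace (- x) with (- (INR 2 * x ^ (2 - 1)) / 2).
  + unfold Rdiv. apply derivable_pt_lim_scal_right.
    apply derivable_pt_lim_opp. apply derivable_pt_lim_pow.
  + simpl. field.
- apply derivable_pt_lim_exp.
Qed.

Lemma g_cont x : continuity_pt g x.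
Proof. apply derivable_continuous_pt. exists (g x * - x). apply g_der. Qed.

Lemma g_pos x : 0 < g x.
Proof. apply exp_pos. Qed.

Lemma exp_le a b : a <= b -> exp a <= exp b.
Proof. intros [h|h]; [left; apply exp_increasing; auto | right; rewrite h; auto]. Qed.

Lemma g_le1 x : g x <= 1.
Proof. unfold g. rewrite <- exp_0. apply exp_le.
  assert (0 <= x ^ 2) by (apply pow2_ge_0). lra. Qed.

Definition Phi x := RInt g 0 x.

Lemma Phi_der x : derivable_pt_lim Phi x (g x).
Proof. apply RInt_deriv, g_cont. Qed.

Lemma Phi_diff a b : RInt g a b = Phi b - Phi a.
Proof. unfold Phi. rewrite <- (RInt_chasles g g_cont 0 a b). ring. Qed.

Lemma Phi_mono a b : a <= b -> Phi a <= Phi b.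
Proof.
intros ab. assert (H := RInt_bound g g_cont a b 0 1 ab).
rewrite Phi_diff in H.
assert (0 * (b - a) <= Phi b - Phi a <= 1 * (b - a)).
{ apply H. intros x _. split; [left; apply g_pos | apply g_le1]. }
lra.
Qed.

Lemma Phi0 : Phi 0 = 0.
Proof. apply RInt_same, g_cont. Qed.

Lemma dpl_val f x l l' : derivable_pt_lim f x l -> l = l' -> derivable_pt_lim f x l'.
Proof. intros H ->; exact H. Qed.

Lemma lin_der c x : derivable_pt_lim (fun y => c * y) x c.
Proof.
apply dpl_val with (c * 1); [|ring].
exact (derivable_pt_lim_scal id c x 1 (derivable_pt_lim_id x)).
Qed.

Lemma scale_der h c x l : derivable_pt_lim h (c*x) l ->
  derivable_pt_lim (fun y => h (c*y)) x (l*c).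
Proof. intro H. exact (derivable_pt_lim_comp (fun y => c*y) h x c l (lin_der c x) H). Qed.

Lemma s2_pos : 0 < sqrt 2.
Proof. apply sqrt_lt_R0; lra. Qed.

Lemma s2_sq : sqrt 2 * sqrt 2 = 2.
Proof. apply sqrt_sqrt; lra. Qed.

Lemma g_scale c x : c * c = 2 -> g (c * x) = exp (- x ^ 2).
Proof.
intros Hc. unfold g. f_equal.
replace ((c * x) ^ 2) with ((c * c) * (x * x)) by ring.
rewrite Hc. simpl. field.
Qed.

Definition F1 y := Phi (sqrt 2 * y) * / sqrt 2.
Definition F2 y := - Phi ((- sqrt 2) * y) * / sqrt 2.

Lemma F1_der x : derivable_pt_lim F1 x (exp (- x ^ 2)).
Proof.
unfold F1. apply dpl_val with (g (sqrt 2 * x) * sqrt 2 * / sqrt 2).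
- apply derivable_pt_lim_scal_right, scale_der, Phi_der.
- rewrite g_scale by apply s2_sq. field. apply Rgt_not_eq, s2_pos.
Qed.

Lemma F2_der x : derivable_pt_lim F2 x (exp (- x ^ 2)).
Proof.
unfold F2. apply dpl_val with (- (g (- sqrt 2 * x) * - sqrt 2) * / sqrt 2).
- apply (derivable_pt_lim_scal_right (fun y => - Phi (- sqrt 2 * y))).
  apply (derivable_pt_lim_opp (fun y => Phi (- sqrt 2 * y))).
  apply scale_der, Phi_der.
- rewrite g_scale; [field; apply Rgt_not_eq, s2_pos | transitivity (sqrt 2 * sqrt 2); [ring | apply s2_sq]].
Qed.

Lemma sq_lim_gen (F : R -> R) (Fd : forall x, derivable_pt_lim F x (exp (- x ^ 2))) :
  F 0 = 0 -> forall eps, 0 < eps -> exists M, 0 <= M /\ forall y, M < y -> Rabs (F y ^ 2 - PI / 4) < eps.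
Proof.
intros F0 eps e0.
destruct (MC.S2 F F0 (fun x _ => Fd x)
   (fun x => derivable_continuous_pt F x (exist _ _ (Fd x))) eps e0) as [M HM].
exists (Rmax M 0). split; [apply Rmax_r|]. intros y Hy. apply HM.
apply Rle_lt_trans with (2 := Hy), Rmax_l.
Qed.

Lemma Phi_sq_lim eps : 0 < eps -> exists M, 0 <= M /\ forall z, M < z ->
  Rabs (Phi z ^ 2 - PI / 2) < eps /\ Rabs (Phi (- z) ^ 2 - PI / 2) < eps.
Proof.
intros e0.
assert (e2 : 0 < eps / 2) by lra.
assert (F10 : F1 0 = 0) by (unfold F1; rewrite Rmult_0_r, Phi0; ring).
assert (F20 : F2 0 = 0) by (unfold F2; rewrite Rmult_0_r, Phi0; ring).
destruct (sq_lim_gen F1 F1_der F10 _ e2) as [M1 [M10 H1]].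
destruct (sq_lim_gen F2 F2_der F20 _ e2) as [M2 [M20 H2]].
assert (sp := s2_pos). assert (ss := s2_sq).
exists (sqrt 2 * Rmax M1 M2). split.
{ apply Rmult_le_pos; [lra | apply Rle_trans with M1; [lra | apply Rmax_l]]. }
intros z Hz.
assert (Hy : Rmax M1 M2 < z / sqrt 2).
{ apply Rmult_lt_reg_l with (sqrt 2); auto. unfold Rdiv.
  replace (sqrt 2 * (z * / sqrt 2)) with z by (field; lra). lra. }
assert (Hy1 : M1 < z / sqrt 2) by (apply Rle_lt_trans with (2 := Hy), Rmax_l).
assert (Hy2 : M2 < z / sqrt 2) by (apply Rle_lt_trans with (2 := Hy), Rmax_r).
specialize (H1 _ Hy1). specialize (H2 _ Hy2).
unfold F1, F2 in *.
replace (sqrt 2 * (z / sqrt 2)) with z in H1 by (field; lra).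
replace (- sqrt 2 * (z / sqrt 2)) with (- z) in H2 by (field; lra).
replace ((Phi z * / sqrt 2) ^ 2 - PI / 4) with ((Phi z ^ 2 - PI/2) / 2) in H1.
2:{ field_simplify; [|lra]. replace (sqrt 2 ^ 2) with 2 by (simpl; lra). field. }
replace ((- Phi (- z) * / sqrt 2) ^ 2 - PI / 4) with ((Phi (- z) ^ 2 - PI/2) / 2) in H2.
2:{ field_simplify; [|lra]. replace (sqrt 2 ^ 2) with 2 by (simpl; lra). field. }
unfold Rdiv in H1, H2. rewrite Rabs_mult, Rabs_inv, (Rabs_right 2) in H1, H2 by lra.
split; lra.
Qed.

Definition K := sqrt (PI / 2).

Lemma K_pos : 0 < K.
Proof. unfold K. apply sqrt_lt_R0. assert (H := PI_RGT_0). lra. Qed.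

Lemma K_sq : K ^ 2 = PI / 2.
Proof. unfold K. simpl. rewrite Rmult_1_r. apply sqrt_sqrt. assert (H := PI_RGT_0). lra. Qed.

Lemma sqrt_close a e : 0 <= a -> Rabs (a ^ 2 - K ^ 2) < e * K -> Rabs (a - K) < e.
Proof.
intros a0 H. assert (Kp := K_pos).
replace (a ^ 2 - K ^ 2) with ((a - K) * (a + K)) in H by ring.
rewrite Rabs_mult, (Rabs_right (a + K)) in H by lra.
assert (Rabs (a - K) * K <= Rabs (a - K) * (a + K)).
{ apply Rmult_le_compat_l; [apply Rabs_pos | lra]. }
apply Rmult_lt_reg_r with K; auto. lra.
Qed.

Lemma Phi_lim eps : 0 < eps -> exists M, 0 <= M /\ forall z, M < z ->
  Rabs (Phi z - K) < eps /\ Rabs (Phi (- z) + K) < eps.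
Proof.
intros e0. assert (Kp := K_pos).
destruct (Phi_sq_lim (eps * K)) as [M [M0 HM]]; [apply Rmult_lt_0_compat; auto|].
exists M; split; auto. intros z Hz. destruct (HM z Hz) as [H1 H2].
rewrite <- K_sq in H1, H2. split.
- apply sqrt_close; auto. rewrite <- Phi0. apply Phi_mono. lra.
- replace (Phi (- z) + K) with (- (- Phi (- z) - K)) by ring. rewrite Rabs_Ropp.
  apply sqrt_close.
  + assert (Phi (- z) <= Phi 0) by (apply Phi_mono; lra). rewrite Phi0 in H. lra.
  + replace ((- Phi (- z)) ^ 2) with (Phi (- z) ^ 2) by ring. auto.
Qed.

Lemma improper_unique f x l1 l2 : improper_lim f x l1 -> improper_lim f x l2 -> l1 = l2.
Proof.
intros H1 H2. destruct (Req_dec l1 l2) as [|ne]; auto. exfalso.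
assert (e0 : 0 < Rabs (l1 - l2) / 2).
{ assert (0 < Rabs (l1 - l2)) by (apply Rabs_pos_lt; lra). lra. }
destruct (H1 _ e0) as [b1 Hb1]. destruct (H2 _ e0) as [b2 Hb2].
specialize (Hb1 (Rmax b1 b2) (Rmax_l _ _)). specialize (Hb2 (Rmax b1 b2) (Rmax_r _ _)).
set (I := RInt f x (Rmax b1 b2)) in *.
assert (Rabs (l1 - l2) <= Rabs (I - l2) + Rabs (I - l1)).
{ replace (l1 - l2) with ((I - l2) + - (I - l1)) by ring.
  eapply Rle_trans; [apply Rabs_triang|]. rewrite Rabs_Ropp. lra. }
lra.
Qed.

Lemma improper_Phi x : improper_lim g x (K - Phi x).
Proof.
intros eps e0. destruct (Phi_lim eps e0) as [M [M0 HM]].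
exists (M + 1). intros b Hb. rewrite Phi_diff.
replace (Phi b - Phi x - (K - Phi x)) with (Phi b - K) by ring.
apply HM. lra.
Qed.

Lemma sqrt2PI : sqrt (2 * PI) = 2 * K.
Proof.
assert (Kp := K_pos). apply sqrt_lem_1.
- assert (H := PI_RGT_0). lra.
- lra.
- replace (2 * K * (2 * K)) with (4 * K ^ 2) by ring. rewrite K_sq. field.
Qed.

Lemma Qfun_eq x : Qfun x = (K - Phi x) / (2 * K).
Proof.
unfold Qfun. rewrite sqrt2PI.
assert (H := epsilon_spec (inhabits 0) (improper_lim (fun t => exp (- (t ^ 2) / 2)) x)
  (ex_intro _ _ (improper_Phi x))).
fold g in H |- *. rewrite (improper_unique g x _ _ H (improper_Phi x)).
unfold Rdiv. ring.
Qed.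


Lemma cont_of_epsd (F : R -> R) x :
  (forall e, 0 < e -> exists d, 0 < d /\ forall y, Rabs (y - x) < d -> Rabs (F y - F x) < e) ->
  continuity_pt F x.
Proof.
intros H e e0. destruct (H e e0) as [d [d0 Hd]]. exists d; split; auto.
intros y [_ Hy]. apply Hd, Hy.
Qed.

Lemma cont_local (F G : R -> R) x r : 0 < r -> (forall y, Rabs (y - x) < r -> F y = G y) ->
  continuity_pt G x -> continuity_pt F x.
Proof.
intros r0 E C. apply cont_of_epsd. intros e e0.
destruct (cont_epsd G x C e e0) as [d [d0 Hd]].
exists (Rmin d r). split; [apply Rmin_pos; lra|]. intros y Hy.
rewrite !E.
- apply Hd. apply Rlt_le_trans with (1 := Hy), Rmin_l.
- unfold Rminus; rewrite Rplus_opp_r, Rabs_R0; lra.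
- apply Rlt_le_trans with (1 := Hy), Rmin_r.
Qed.

Lemma Phi_lip a b : Rabs (Phi b - Phi a) <= Rabs (b - a).
Proof.
destruct (Rle_dec a b) as [h|h].
- assert (H := RInt_bound g g_cont a b 0 1 h).
  rewrite Phi_diff in H.
  assert (0 * (b - a) <= Phi b - Phi a <= 1 * (b - a)).
  { apply H. intros x _. split; [left; apply g_pos | apply g_le1]. }
  rewrite !Rabs_right; lra.
- assert (h' : b <= a) by lra.
  assert (H := RInt_bound g g_cont b a 0 1 h').
  rewrite Phi_diff in H.
  assert (0 * (a - b) <= Phi a - Phi b <= 1 * (a - b)).
  { apply H. intros x _. split; [left; apply g_pos | apply g_le1]. }
  rewrite !Rabs_left1; lra.
Qed.

Lemma Q_cont x : continuity_pt Qfun x.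
Proof.
assert (Kp := K_pos).
apply cont_of_epsd. intros e e0. exists (2 * K * e). split.
{ apply Rmult_lt_0_compat; lra. }
intros y Hy. rewrite !Qfun_eq.
replace ((K - Phi y) / (2 * K) - (K - Phi x) / (2 * K)) with (- ((Phi y - Phi x) / (2 * K)))
  by (field; lra).
rewrite Rabs_Ropp. unfold Rdiv. rewrite Rabs_mult, Rabs_inv, (Rabs_right (2 * K)) by lra.
apply Rmult_lt_reg_r with (2 * K); [lra|].
rewrite Rmult_assoc, Rinv_l by lra. rewrite Rmult_1_r.
apply Rle_lt_trans with (1 := Phi_lip x y). lra.
Qed.

Lemma Q_mono a b : a <= b -> Qfun b <= Qfun a.
Proof.
intros ab. assert (Kp := K_pos). rewrite !Qfun_eq.
assert (Phi a <= Phi b) by (apply Phi_mono; auto).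
unfold Rdiv. apply Rmult_le_compat_r; [left; apply Rinv_0_lt_compat; lra | lra].
Qed.

Lemma Phi_ge x : - K <= Phi x.
Proof.
destruct (Rle_dec (- K) (Phi x)) as [|h]; auto. exfalso.
assert (e0 : 0 < - K - Phi x) by lra.
destruct (Phi_lim _ e0) as [M [M0 HM]].
set (z := Rmax (M + 1) (- x + 1)).
assert (Hz : M < z) by (unfold z; apply Rlt_le_trans with (M+1); [lra | apply Rmax_l]).
assert (Hz2 : - z <= x) by (assert (- x + 1 <= z) by apply Rmax_r; lra).
destruct (HM z Hz) as [_ H2].
assert (Phi (- z) <= Phi x) by (apply Phi_mono; auto).
apply Rabs_def2 in H2. lra.
Qed.

Lemma Q_le1 x : Qfun x <= 1.
Proof.
assert (Kp := K_pos). rewrite Qfun_eq. assert (H := Phi_ge x).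
apply Rmult_le_reg_r with (2 * K); [lra|]. unfold Rdiv.
rewrite Rmult_assoc, Rinv_l by lra. lra.
Qed.

Lemma Q_lim e : 0 < e -> exists M, forall x, x < - M -> 1 - e < Qfun x.
Proof.
intros e0. assert (Kp := K_pos).
assert (e1 : 0 < 2 * K * e) by (apply Rmult_lt_0_compat; lra).
destruct (Phi_lim _ e1) as [M [M0 HM]].
exists M. intros x Hx.
destruct (HM (- x)) as [_ H2]; [lra|]. rewrite Ropp_involutive in H2.
apply Rabs_def2 in H2. rewrite Qfun_eq.
apply Rmult_lt_reg_r with (2 * K); [lra|]. unfold Rdiv.
rewrite Rmult_assoc, Rinv_l by lra. lra.
Qed.


Lemma ln2_pos : 0 < ln 2.
Proof. rewrite <- ln_1. apply ln_increasing; lra. Qed.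

Section QC.
Variable B : R.
Hypothesis hB : 0 < B.
Let c := B * ln 2.
Lemma c_pos : 0 < c.
Proof. unfold c. apply Rmult_lt_0_compat; [lra | apply ln2_pos]. Qed.

Definition arg S := (S - B * ln 2) / sqrt (2 * S).

Lemma Qcum_pos S : 0 < S -> Qcum B S = Qfun (arg S).
Proof. intros h. unfold Qcum. destruct (Rle_dec S 0); [lra | reflexivity]. Qed.

Lemma Qcum_neg S : S <= 0 -> Qcum B S = 1.
Proof. intros h. unfold Qcum. destruct (Rle_dec S 0); [reflexivity | lra]. Qed.

Lemma Qcum_le1 S : Qcum B S <= 1.
Proof. unfold Qcum. destruct (Rle_dec S 0); [lra | apply Q_le1]. Qed.

Lemma sqrt2S S : 0 <= S -> sqrt (2 * S) = sqrt 2 * sqrt S.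
Proof. intros h. apply sqrt_mult; lra. Qed.

Lemma arg_mono a b : 0 < a -> a <= b -> arg a <= arg b.
Proof.
intros a0 ab. assert (cp := c_pos). fold c. unfold arg. fold c.
rewrite !sqrt2S by lra.
assert (sp := s2_pos).
set (u := sqrt a). set (v := sqrt b).
assert (u0 : 0 < u) by (apply sqrt_lt_R0; auto).
assert (uv : u <= v) by (apply sqrt_le_1_alt; auto).
assert (ua : u * u = a) by (apply sqrt_sqrt; lra).
assert (vb : v * v = b) by (apply sqrt_sqrt; lra).
rewrite <- ua, <- vb.
assert (v0 : 0 < v) by lra.
unfold Rdiv. apply Rmult_le_reg_r with (sqrt 2 * u * v).
{ apply Rmult_lt_0_compat; [apply Rmult_lt_0_compat|]; auto. }
replace ((u * u - c) * / (sqrt 2 * u) * (sqrt 2 * u * v)) with ((u * u - c) * v) by (field; lra).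
replace ((v * v - c) * / (sqrt 2 * v) * (sqrt 2 * u * v)) with ((v * v - c) * u) by (field; lra).
assert (0 <= (v - u) * (u * v + c)).
{ apply Rmult_le_pos; [lra|]. assert (0 < u * v) by (apply Rmult_lt_0_compat; auto). lra. }
nra.
Qed.

Lemma Qcum_mono a b : a <= b -> Qcum B b <= Qcum B a.
Proof.
intros ab. destruct (Rle_dec a 0) as [h|h].
- rewrite (Qcum_neg a h). apply Qcum_le1.
- rewrite !Qcum_pos by lra. apply Q_mono, arg_mono; lra.
Qed.

Lemma Qcum0 : Qcum B 0 = 1.
Proof. apply Qcum_neg; lra. Qed.

Lemma arg_cont x : 0 < x -> continuity_pt arg x.
Proof.
intros x0. unfold arg.
change (continuity_pt (div_fct (minus_fct id (fct_cte (B * ln 2))) (comp sqrt (mult_real_fct 2 id))) x).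
apply continuity_pt_div.
- apply continuity_pt_minus; [apply derivable_continuous_pt, derivable_pt_id | apply continuity_pt_const; intros u v; reflexivity].
- apply continuity_pt_comp.
  + apply continuity_pt_scal, derivable_continuous_pt, derivable_pt_id.
  + apply sqrt_continuity_pt. unfold mult_real_fct, id. lra.
- unfold comp, mult_real_fct, id. apply Rgt_not_eq, sqrt_lt_R0. lra.
Qed.

Lemma arg_small M : 0 < M -> exists d, 0 < d /\ forall y, 0 < y < d -> arg y < - M.
Proof.
intros M0. assert (cp := c_pos).
exists (Rmin (c / 2) (c * c / (8 * (M * M)))). split.
{ apply Rmin_pos; [lra|]. apply Rdiv_lt_0_compat; [nra | nra]. }
intros y [y0 yd].
assert (y1 : y < c / 2) by (apply Rlt_le_trans with (1 := yd), Rmin_l).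
assert (y2 : y < c * c / (8 * (M * M))) by (apply Rlt_le_trans with (1 := yd), Rmin_r).
unfold arg. fold c.
set (t := sqrt (2 * y)).
assert (t0 : 0 < t) by (apply sqrt_lt_R0; lra).
assert (tt : t * t = 2 * y) by (apply sqrt_sqrt; lra).
assert (y3 : 8 * (M * M) * y < c * c).
{ apply Rmult_lt_reg_r with (/ (8 * (M * M))).
  - apply Rinv_0_lt_compat; nra.
  - replace (8 * (M * M) * y * / (8 * (M * M))) with y by (field; lra). exact y2. }
assert (h1 : (2 * M * t) * (2 * M * t) < c * c) by nra.
assert (h2 : 2 * M * t < c).
{ destruct (Rlt_or_le (2 * M * t) c) as [|h]; auto. exfalso.
  assert (c * c <= (2 * M * t) * (2 * M * t)) by (apply Rmult_le_compat; lra). lra. }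
apply Rmult_lt_reg_r with t; auto. unfold Rdiv.
rewrite Rmult_assoc, Rinv_l by lra. lra.
Qed.

Lemma Qcum_cont x : continuity_pt (Qcum B) x.
Proof.
destruct (Rtotal_order x 0) as [h|[h|h]].
- apply cont_local with (G := fun _ => 1) (r := - x); [lra| |].
  + intros y Hy. apply Rabs_def2 in Hy. apply Qcum_neg. lra.
  + apply continuity_pt_const. intros u v; reflexivity.
- subst x. apply cont_of_epsd. intros e e0.
  destruct (Q_lim e e0) as [M HM].
  destruct (arg_small (Rmax M 1)) as [d [d0 Hd]].
  { apply Rlt_le_trans with 1; [lra | apply Rmax_r]. }
  exists d. split; auto. intros y Hy. rewrite Qcum0.
  rewrite Rminus_0_r in Hy. apply Rabs_def2 in Hy.
  destruct (Rle_dec y 0) as [hy|hy].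
  + rewrite Qcum_neg by auto. unfold Rminus; rewrite Rplus_opp_r, Rabs_R0; auto.
  + rewrite Qcum_pos by lra.
    assert (A1 : arg y < - M).
    { apply Rlt_le_trans with (- Rmax M 1); [apply Hd; lra|].
      apply Ropp_le_contravar, Rmax_l. }
    assert (A2 := HM _ A1). assert (A3 := Q_le1 (arg y)).
    rewrite Rabs_left1 by lra. lra.
- apply cont_local with (G := fun S => Qfun (arg S)) (r := x); [lra| |].
  + intros y Hy. apply Rabs_def2 in Hy. apply Qcum_pos. lra.
  + apply (continuity_pt_comp arg Qfun x (arg_cont x h) (Q_cont _)).
Qed.
End QC.


Lemma nat_above r : exists N : nat, r < INR N.
Proof.
destruct (archimed r) as [h _]. exists (Z.to_nat (up r)).
destruct (Z_le_gt_dec 0 (up r)) as [z|z].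
- rewrite INR_IZR_INZ, Z2Nat.id by auto. lra.
- apply Rlt_le_trans with (IZR (up r)); [lra|].
  apply Rle_trans with 0; [apply IZR_le; lia | apply pos_INR].
Qed.

Section Main.
Variable f : R -> R.
Hypothesis fc : forall x, continuity_pt f x.
Hypothesis fm : forall a b, a <= b -> f b <= f a.
Hypothesis f0 : f 0 = 1.

Lemma L0 E n : avgf f (S n) E = rsum (fun m => f (rsum E (m - 1)) * E m) (S n).
Proof.
unfold avgf. induction n as [|n IH].
- simpl. rewrite f0. ring.
- change (rsum (fun m => if Nat.leb m 1 then 0 else f (rsum E (m - 1)) * E m) (S (S n)))
    with (rsum (fun m => if Nat.leb m 1 then 0 else f (rsum E (m - 1)) * E m) (S n)
          + (if Nat.leb (S (S n)) 1 then 0 else f (rsum E (S (S n) - 1)) * E (S (S n)))).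
  rewrite <- Rplus_assoc, IH. simpl. reflexivity.
Qed.

Lemma L1 E k : (forall i, (1 <= i <= k)%nat -> 0 <= E i) ->
  RInt f 0 (rsum E k) <= rsum (fun m => f (rsum E (m - 1)) * E m) k.
Proof.
induction k as [|k IH]; intros H.
- simpl. rewrite RInt_same by auto. lra.
- simpl rsum. rewrite Nat.sub_0_r.
  rewrite <- (RInt_chasles f fc 0 (rsum E k)).
  assert (Ek : 0 <= E (S k)) by (apply H; lia).
  assert (IH' := IH (fun i Hi => H i ltac:(lia))).
  assert (Hb := RInt_bound f fc (rsum E k) (rsum E k + E (S k)) (f (rsum E k + E (S k))) (f (rsum E k)) ltac:(lra)).
  destruct Hb as [_ Hb].
  { intros x Hx. split; apply fm; lra. }
  replace (rsum E k + E (S k) - rsum E k) with (E (S k)) in Hb by ring.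
  lra.
Qed.

Lemma rsum_const h k : rsum (fun _ => h) k = INR k * h.
Proof. induction k as [|k IH]; simpl rsum; [simpl; ring | rewrite IH, S_INR; ring]. Qed.

Lemma L2 h k : 0 <= h ->
  rsum (fun m => f (rsum (fun _ => h) (m - 1)) * h) k <= RInt f 0 (INR k * h) + h * (1 - f (INR k * h)).
Proof.
intros h0. induction k as [|k IH].
- simpl. rewrite Rmult_0_l, RInt_same, f0 by auto. lra.
- simpl rsum. rewrite Nat.sub_0_r, rsum_const, S_INR.
  rewrite <- (RInt_chasles f fc 0 (INR k * h)).
  assert (Hb := RInt_bound f fc (INR k * h) ((INR k + 1) * h) (f ((INR k + 1) * h)) (f (INR k * h)) ltac:(nra)).
  destruct Hb as [Hb _].
  { intros x Hx. split; apply fm; lra. }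
  replace ((INR k + 1) * h - INR k * h) with h in Hb by ring.
  nra.
Qed.
End Main.

Lemma Einf_ge0 B Trel : 0 <= Einf B Trel.
Proof.
unfold Einf. apply Rmult_le_pos.
- assert (H := pow2_ge_0 (Qinv (1 - Trel))). lra.
- apply pow2_ge_0.
Qed.

Theorem mainTheorem7 (B Trel : R) (hB : 0 < B) (hT : 0 < Trel < 1) :
  Un_cv (fun M : nat => Eas M B Trel) (RInt (fun E => Qcum B E) 0 (Einf B Trel)).
Proof.
change (RInt (fun E => Qcum B E) 0 (Einf B Trel)) with (RInt (Qcum B) 0 (Einf B Trel)).
set (T := Einf B Trel). assert (T0 : 0 <= T) by apply Einf_ge0.
set (I := RInt (Qcum B) 0 T).
assert (fc := Qcum_cont B hB). assert (fm := Qcum_mono B). assert (f0 := Qcum0 B).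
assert (bounds : forall n, I <= Eas (S n) B Trel <= I + T * (1 - Qcum B T) / INR (S n)).
{ intros n.
  destruct (MC.S3 (Qcum B) n T T0 f0 fc) as [E [Ef Emin]].
  assert (HP := epsilon_spec (inhabits 0) (fun v =>
    (exists E, feasible (S n) (Einf B Trel) E /\ avg_energy B (S n) E = v) /\
    (forall E, feasible (S n) (Einf B Trel) E -> v <= avg_energy B (S n) E))
    (ex_intro _ (avgf (Qcum B) (S n) E) (conj (ex_intro _ E (conj Ef eq_refl)) Emin))).
  fold (Eas (S n) B Trel) in HP. destruct HP as [[E' [E'f E'v]] Hmin].
  assert (Hn : 0 < INR (S n)) by (apply lt_0_INR; lia).
  split.
  - rewrite <- E'v. change (avg_energy B (S n) E') with (avgf (Qcum B) (S n) E').
    rewrite L0 by auto. destruct E'f as [E'0 E's].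
    unfold I. fold T in E's. rewrite <- E's. apply L1; auto.
  - set (h := T / INR (S n)).
    assert (h0 : 0 <= h) by (unfold h, Rdiv; apply Rmult_le_pos; [auto | left; apply Rinv_0_lt_compat; auto]).
    assert (hT' : INR (S n) * h = T) by (unfold h; field; lra).
    assert (Fu : feasible (S n) (Einf B Trel) (fun _ => h)).
    { split; [intros; auto | rewrite rsum_const; exact hT']. }
    apply Rle_trans with (1 := Hmin _ Fu).
    change (avg_energy B (S n) (fun _ => h)) with (avgf (Qcum B) (S n) (fun _ => h)).
    rewrite L0 by auto.
    eapply Rle_trans; [apply L2; auto|].
    rewrite hT'. unfold I. replace (T * (1 - Qcum B T) / INR (S n)) with (h * (1 - Qcum B T)) by (unfold h; field; lra).
    lra. }
intros eps e0.
set (C := T * (1 - Qcum B T)).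
assert (C0 : 0 <= C) by (unfold C; apply Rmult_le_pos; [auto | assert (H := Qcum_le1 B T); lra]).
destruct (nat_above (C / eps)) as [N HN].
assert (HN0 : 0 <= C / eps) by (unfold Rdiv; apply Rmult_le_pos; [auto | left; apply Rinv_0_lt_compat; auto]).
exists N. intros n Hn.
destruct n as [|n].
{ assert (N = 0%nat) by lia. subst N. simpl in HN. lra. }
destruct (bounds n) as [b1 b2]. fold C in b2.
assert (Hn' : INR N <= INR (S n)) by (apply le_INR; lia).
assert (Hp : 0 < INR (S n)) by (apply lt_0_INR; lia).
assert (C < eps * INR (S n)).
{ apply Rmult_lt_reg_r with (/ eps); [apply Rinv_0_lt_compat; auto|].
  replace (eps * INR (S n) * / eps) with (INR (S n)) by (field; lra). unfold Rdiv in HN. lra. }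
assert (C / INR (S n) < eps).
{ apply Rmult_lt_reg_r with (INR (S n)); auto. unfold Rdiv.
  rewrite Rmult_assoc, Rinv_l by lra. lra. }
unfold R_dist. rewrite Rabs_right by lra. lra.
Qed.
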